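(* Let $R \neq 0$ be a ring and let $n \geq 3$ be an integer. Then the full matrix ring ${\rm M}_n(R)$ is not a GSWNC ring.
   Context: All rings are associative with identity. An element $a$ of a ring $S$ is called strongly weakly nil-clean if there exist an idempotent $e \in S$ and a nilpotent $q \in S$ with $eq = qe$ such that $a = q + e$ or $a = q - e$. A ring $S$ is called GSWNC (generalized strongly weakly nil-clean) if every non-invertible element of $S$ is strongly weakly nil-clean. *)

(* Defs.v *)
From HB Require Import structures.
From mathcomp Require Import all_boot all_order all_algebra.
Set Implicit Arguments. Unset Strict Implicit. Unset Printing Implicit Defensive.
Import GRing.Theory.
Local Open Scope ring_scope.

Definition invertible (S : pzRingType) (a : S) : Prop :=
  exists b : S, a * b = 1 /\ b * a = 1.

Definition idempotent (S : pzRingType) (e : S) : Prop := e * e = e.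

Definition nilpotent (S : pzRingType) (q : S) : Prop :=
  exists k : nat, q ^+ k = 0.

Definition strongly_weakly_nil_clean (S : pzRingType) (a : S) : Prop :=
  exists (e q : S), idempotent e /\ nilpotent q /\ e * q = q * e /\
    (a = q + e \/ a = q - e).

Definition GSWNC (S : pzRingType) : Prop :=
  forall a : S, ~ invertible a -> strongly_weakly_nil_clean a.

(* Main.v *)
Require Import Defs.
From mathcomp Require Import all_boot all_order all_algebra.
Set Implicit Arguments. Unset Strict Implicit. Unset Printing Implicit Defensive.
Import GRing.Theory.
Local Open Scope ring_scope.

Lemma idem_pow (S : pzRingType) (E : S) m : E * E = E -> E ^+ m.+1 = E.
Proof. move=> hE; elim: m => [|m IH]; first by rewrite expr1.
by rewrite exprS IH. Qed.

Lemma nil_mul (S : pzRingType) (x y : S) k :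
  GRing.comm x y -> x ^+ k = 0 -> (x * y) ^+ k = 0.
Proof. by move=> c h; rewrite exprMn_comm // h mul0r. Qed.

Lemma key (S : pzRingType) (a E : S) : E * E = E -> E <> 0 ->
  a * a = a + E -> a * E = a -> ~ strongly_weakly_nil_clean a.
Proof.
move=> hEE hE0 haa haE [e [q [he [[k hq] [ceq hs]]]]].
rewrite /Defs.idempotent in he.
case: hs => ha.
- have hE : E = q * (q + e + e - 1).
    have -> : E = a * a - a by rewrite haa addrAC subrr add0r.
    rewrite ha !mulrDl !mulrDr !mulrN1 he ceq.
    by rewrite !addrA opprD addrACA subrr addr0.
  apply: hE0; rewrite -(idem_pow k hEE) hE.
  apply: nil_mul; last by rewrite exprS hq mulr0.
  by rewrite /GRing.comm !mulrDr !mulrDl mulrN1 mulN1r ceq.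
- have h3 : a * a + a = a * a * a.
    by rewrite -mulrA haa mulrDr haE haa addrC.
  have hg : a * a + a = q * (q - e - e + 1).
    rewrite ha !mulrDl !mulrDr !mulrN !mulNr opprK he mulr1 -ceq.
    by rewrite !addrA addrAC addrK.
  have hgk : (a * a + a) ^+ k.+1 = 0.
    rewrite hg; apply: nil_mul; last by rewrite exprS hq mulr0.
    by rewrite /GRing.comm !mulrDr !mulrDl mulr1 mul1r !mulrN !mulNr ceq.
  have ha3 : a ^+ (3 * k.+1) = 0.
    by rewrite exprM -hgk h3; congr (_ ^+ _); rewrite !exprS expr0 mulr1 mulrA.
  have hE : E = a * (a - 1) by rewrite mulrBr mulr1 haa addrAC subrr add0r.
  apply: hE0; rewrite -(idem_pow (3 * k.+1).-1 hEE) prednK ?muln_gt0 //.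
  rewrite hE; apply: nil_mul => //.
  by rewrite /GRing.comm mulrBr mulrBl mulr1 mul1r.
Qed.

Lemma dm (R : nzRingType) m (i j k l : 'I_m) :
  (delta_mx i j : 'M[R]_m) * delta_mx k l = if j == k then delta_mx i l else 0.
Proof. by rewrite -mulmxE mul_delta_mx_cond; case: eqP => _; rewrite ?mulr1n ?mulr0n. Qed.

Lemma rearr (V : zmodType) (p q r s : V) : p + r + s + (q + s) = r + q + s + (p + s).
Proof. rewrite (addrC p r) -!addrA; congr (_ + _); rewrite !addrA; congr (_ + _).
by rewrite addrC (addrC p s) addrA. Qed.

Theorem theorem2p25 (R : nzRingType) (n : nat) (hn : (3 <= n.+1)%N) :
  ~ GSWNC 'M[R]_n.+1.
Proof.
move=> hG.
pose i0 : 'I_n.+1 := inord 0.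
pose i1 : 'I_n.+1 := inord 1.
pose i2 : 'I_n.+1 := inord 2.
have v0 : nat_of_ord i0 = 0%N by rewrite /i0 inordK.
have v1 : nat_of_ord i1 = 1%N by rewrite /i1 inordK //; apply: leq_trans hn.
have v2 : nat_of_ord i2 = 2%N by rewrite /i2 inordK.
have h01 : (i0 == i1) = false by apply/negbTE; rewrite -val_eqE /= v0 v1.
have h10 : (i1 == i0) = false by apply/negbTE; rewrite -val_eqE /= v0 v1.
have h20 : (i2 == i0) = false by apply/negbTE; rewrite -val_eqE /= v0 v2.
have h21 : (i2 == i1) = false by apply/negbTE; rewrite -val_eqE /= v2 v1.
pose a : 'M[R]_n.+1 := delta_mx i0 i1 + delta_mx i1 i0 + delta_mx i1 i1.
pose E : 'M[R]_n.+1 := delta_mx i0 i0 + delta_mx i1 i1.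
have hEE : E * E = E.
  by rewrite /E !mulrDl !mulrDr !dm !eqxx h01 h10 addr0 add0r.
have hE0 : E <> 0.
  move/matrixP => /(_ i0 i0); rewrite !mxE !eqxx h01 /= addr0.
  by move/eqP; rewrite oner_eq0.
have haa : a * a = a + E.
  rewrite /a /E !mulrDl !mulrDr !dm !eqxx h01 h10 !addr0 !add0r.
  exact: rearr.
have haE : a * E = a.
  rewrite /a /E !mulrDl !mulrDr !dm !eqxx h01 h10 !addr0 !add0r.
  by [].
have := key hEE hE0 haa haE; apply; apply: hG => -[b [hab _]].
move/matrixP: hab => /(_ i2 i2); rewrite !mxE eqxx /= big1.
  by move/eqP; rewrite eq_sym oner_eq0.
by move=> k _; rewrite !mxE h20 h21 /= !addr0 mul0r.
Qed.
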